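(* Let $r>0$, $p\in(0,1)$, and let $X_1,\dots,X_n$ be i.i.d. samples of a negative binomial random variable $X$ with $\Pr\{X=x\}=\frac{\Gamma(x+r)}{\Gamma(x+1)\Gamma(r)}(1-p)^xp^r$ for $x=0,1,2,\dots$. Let $T(x)=\frac{r+x}{r}$ and $\theta=\frac1p$. Then $$\Pr\Big\{\sum_{i=1}^nT(X_i)\ge nz\Big\}\le\left[\frac{pz-p}{1-p}\Big(\frac{z-zp}{z-1}\Big)^z\right]^{nr}\quad\text{for } z\ge\theta=\tfrac1p,$$ $$\Pr\Big\{\sum_{i=1}^nT(X_i)\le nz\Big\}\le\left[\frac{pz-p}{1-p}\Big(\frac{z-zp}{z-1}\Big)^z\right]^{nr}\quad\text{for } 1<z\le\theta=\tfrac1p.$$ *)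

(* Defs.v *)
From HB Require Import structures.
From mathcomp Require Import all_boot all_order all_algebra.
From mathcomp Require Import all_classical all_reals all_analysis.
Set Implicit Arguments. Unset Strict Implicit. Unset Printing Implicit Defensive.
Import Order.TTheory GRing.Theory Num.Theory.
Local Open Scope classical_set_scope.
Local Open Scope ring_scope.

(* Negative binomial pmf with real parameter r > 0:
   Gamma(x+r)/(Gamma(x+1) Gamma(r)) = r (r+1) ... (r+x-1) / x!  for x : nat. *)
Definition negbin_pmf (R : realType) (r p : R) (x : nat) : R :=
  (\prod_(j < x) (r + j%:R)) / (x`!)%:R * (1 - p) ^+ x * p `^ r.

Definition Tstat (R : realType) (r : R) (x : nat) : R := (r + x%:R) / r.

Definition mutually_independent_nat (d : measure_display) (T : measurableType d)
  (R : realType) (P : probability T R) (n : nat) (X : 'I_n -> T -> nat) : Prop :=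
  forall (J : {set 'I_n}) (B : 'I_n -> set nat),
    P (\bigcap_(j in [set j | j \in J]) (X j @^-1` B j)) =
    (\prod_(j in J) P (X j @^-1` B j))%E.

Definition nb_bound (R : realType) (r p : R) (n : nat) (z : R) : R :=
  ((p * z - p) / (1 - p) * ((z - z * p) / (z - 1)) `^ z) `^ (n%:R * r).

(* Main.v *)
Require Import Defs.
From HB Require Import structures.
From mathcomp Require Import all_boot all_order all_algebra.
From mathcomp Require Import all_classical all_reals all_analysis.
From mathcomp Require Import ring lra.
Import Order.TTheory GRing.Theory Num.Theory.
Local Open Scope classical_set_scope.
Local Open Scope ring_scope.
Set Implicit Arguments. Unset Strict Implicit.

Section An.
Variable R : realType.
Definition cc (r : R) (x : nat) : R := (\prod_(j < x) (r + j%:R)) / (x`!)%:R.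
Definition SS (r : R) N y := \sum_(x < N) cc r x * y ^+ x.
Definition DD (r : R) N y := \sum_(x < N) cc r x * (x%:R * y ^+ x.-1).

Lemma cc_rec r x : cc r x.+1 * x.+1%:R = (r + x%:R) * cc r x.
Proof.
rewrite /cc big_ord_recr /= factS natrM.
have h1 : (x.+1%:R : R) != 0 by rewrite pnatr_eq0.
have h2 : ((x`!)%:R : R) != 0 by rewrite pnatr_eq0 -lt0n fact_gt0.
field; rewrite ?h1 ?h2 ?andbT //=.
Qed.

Lemma E_id r N y : (1 - y) * DD r N y - r * SS r N y = - (N%:R * cc r N * y ^+ N.-1).
Proof.
elim: N => [|n IH]; first by rewrite /DD /SS !big_ord0 !mul0r; ring.
rewrite /DD /SS !big_ord_recr /=.
have -> : (1 - y) * (\sum_(i < n) cc r i * (i%:R * y ^+ i.-1) + cc r n * (n%:R * y ^+ n.-1)) -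
  r * (\sum_(i < n) cc r i * y ^+ i + cc r n * y ^+ n) =
  ((1 - y) * DD r n y - r * SS r n y) + (1 - y) * cc r n * (n%:R * y ^+ n.-1) - r * cc r n * y ^+ n.
  rewrite /DD /SS; ring.
rewrite IH -mulrA (mulrC _ (cc r n.+1)) cc_rec.
case: n {IH} => [|m] /=; first by rewrite !mul0r mulr0 expr0; ring.
rewrite exprS; ring.
Qed.
End An.

Section B.
Variable R : realType.

Lemma der_1m (w : R) : is_derive w 1 (fun w => 1 - w) (-1).
Proof.
have := @is_deriveB R R R (cst 1) id w 1 0 1 _ _.
by rewrite sub0r; apply.
Qed.

Lemma der_SS (r : R) (N : nat) (w : R) : is_derive w 1 (fun w => SS r N (1 - w)) (- DD r N (1 - w)).
Proof.
elim: N => [|n IH].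
  rewrite /SS /DD big_ord0 oppr0.
  have -> : (fun w : R => \sum_(x < 0) cc r x * (1 - w) ^+ x) = cst 0.
    by apply/funext => x; rewrite big_ord0.
  exact: is_derive_cst.
have h2 := is_deriveZ (cc r n) (is_deriveX n (der_1m w)).
have h3 := is_deriveD IH h2.
move: h3; set F := (_ + _ \*: _).
have -> : F = (fun w : R => SS r n.+1 (1 - w)).
  by apply/funext => x; rewrite /F /SS big_ord_recr /= !fctE.
move=> h3.
apply: (is_derive_eq h3).
rewrite /DD big_ord_recr /= opprD /GRing.scale /=.
ring.
Qed.
End B.

Section C.
Variable R : realType.

Lemma cc_ge0 (r : R) x : 0 < r -> 0 <= cc r x.
Proof.
move=> r0; rewrite /cc divr_ge0 //.
apply: prodr_ge0 => i _; apply: addr_ge0; [exact: ltW|exact: ler0n].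
Qed.

Lemma SS0 (r : R) N : SS r N 0 <= 1.
Proof.
case: N => [|m]; first by rewrite /SS big_ord0.
rewrite /SS big_ord_recl /= expr0 mulr1 big1 ?addr0.
  by rewrite /cc big_ord0 fact0 divr1.
by move=> i _; rewrite expr0n /= mulr0.
Qed.

Lemma SS_bound (r : R) (N : nat) (a : R) : 0 < r -> 0 <= a -> a < 1 -> SS r N a <= (1 - a) `^ (-r).
Proof.
move=> r0 a0 a1.
pose f := fun w : R => w `^ r * SS r N (1 - w).
pose df := fun w : R => w `^ r *: (- DD r N (1 - w)) + SS r N (1 - w) *: (r * w `^ (r - 1)).
have Hd : forall w : R, 0 < w -> is_derive w 1 f (df w).
  move=> w w0; exact: (is_deriveM (is_derive1_powR r w0) (der_SS r N w)).
have la : 1 - a <= 1 by lra.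
have pos : forall w : R, w \in `[1 - a, 1] -> 0 < w.
  by move=> w; rewrite in_itv /= => /andP[h _]; lra.
have [c cI E] : exists2 c, c \in `[1 - a, 1] & f 1 - f (1 - a) = df c * (1 - (1 - a)).
  apply: MVT_segment => //.
    move=> w; rewrite in_itv /= => /andP[h _]; apply: Hd; lra.
  apply: derivable_within_continuous => w wI.
  by have [] := Hd w (pos w wI).
have c0 := pos c cI.
have c1 : c <= 1 by move: cI; rewrite in_itv /= => /andP[].
have dfc : 0 <= df c.
  rewrite /df /GRing.scale /= -(mulr_powRB1 (ltW c0) r0).
  have e := E_id r N (1 - c).
  have -> : c * c `^ (r - 1) * - DD r N (1 - c) + SS r N (1 - c) * (r * c `^ (r - 1)) =
     c `^ (r - 1) * - ((1 - (1 - c)) * DD r N (1 - c) - r * SS r N (1 - c)) by ring.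
  rewrite e opprK; apply: mulr_ge0; first exact: powR_ge0.
  apply: mulr_ge0; first by apply: mulr_ge0; [exact: ler0n|exact: cc_ge0].
  apply: exprn_ge0; lra.
have f1 : f 1 <= 1 by rewrite /f powR1 mul1r subrr; exact: SS0.
have fa : f (1 - a) <= 1.
  have : 0 <= f 1 - f (1 - a) by rewrite E; apply: mulr_ge0 => //; lra.
  lra.
move: fa; rewrite /f (_ : 1 - (1 - a) = a); last by ring.
have p0 : 0 < (1 - a) `^ r by apply: powR_gt0; lra.
rewrite powRN -ler_pdivlMl // => h; apply: le_trans h _.
by rewrite mulr1.
Qed.

End C.

Section D.
Variables (R : realType) (d : measure_display) (T : measurableType d)
  (P : probability T R).

Lemma mu_bigU (I : Type) (s : seq I) (Q : pred I) (F : I -> set T) :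
  (forall i, measurable (F i)) ->
  (P (\big[setU/set0]_(i <- s | Q i) F i) <= \sum_(i <- s | Q i) P (F i))%E.
Proof.
move=> mF; elim: s => [|a s IH]; first by rewrite !big_nil measure0.
rewrite !big_cons; case: ifP => _ //.
apply: le_trans (measureU2 _ (mF a) (bigsetU_measurable _ _)) _ => //.
exact: leeD2l.
Qed.

Lemma mem_bigU (I : eqType) (s : seq I) (Q : pred I) (F : I -> set T) t :
  (\big[setU/set0]_(i <- s | Q i) F i) t <-> exists i, [/\ i \in s, Q i & F i t].
Proof.
elim: s => [|a s IH]; first by rewrite big_nil; split => // -[i []].
rewrite big_cons; case: ifP => Qa.
  split.
    case => [h|/IH [i [h1 h2 h3]]]; first by exists a; rewrite mem_head.
    by exists i; rewrite in_cons h1 orbT.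
  move=> [i [h1 h2 h3]]; move: h1; rewrite in_cons => /orP[/eqP Ei|h1]; first by left; rewrite -Ei.
  by right; apply/IH; exists i.
rewrite IH; split => -[i [h1 h2 h3]]; exists i; split => //; first by rewrite in_cons h1 orbT.
move: h1; rewrite in_cons => /orP[/eqP Ei|//]; by rewrite Ei Qa in h2.
Qed.

Lemma nb_pmf_ge0 (r p : R) x : 0 < r -> 0 < p -> p < 1 -> 0 <= negbin_pmf r p x.
Proof.
move=> r0 p0 p1; rewrite /negbin_pmf; apply: mulr_ge0; last exact: powR_ge0.
apply: mulr_ge0; last by apply: exprn_ge0; lra.
apply: divr_ge0 => //; apply: prodr_ge0 => i _; apply: addr_ge0; [exact: ltW|exact: ler0n].
Qed.

Lemma nb_pmf_u (r p u : R) x : negbin_pmf r p x * u ^+ x = p `^ r * (cc r x * ((1 - p) * u) ^+ x).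
Proof. rewrite /negbin_pmf /cc exprMn; ring. Qed.

End D.

Section E.
Variables (R : realType) (d : measure_display) (T : measurableType d)
  (P : probability T R) (r p : R) (n : nat) (X : 'I_n -> T -> nat).
Hypotheses (hr : 0 < r) (hp0 : 0 < p) (hp1 : p < 1)
  (hXmeas : forall i, measurable_fun setT (X i))
  (hXlaw : forall i (x : nat), P (X i @^-1` [set x]) = (negbin_pmf r p x)%:E)
  (hXind : mutually_independent_nat P X).

Definition Ev (v : 'I_n -> nat) : set T :=
  \bigcap_(j in [set j | j \in [set: 'I_n]%SET]) (X j @^-1` [set v j]).

Lemma mEv v : measurable (Ev v).
Proof.
apply: fin_bigcap_measurable; first exact: finite_finset.
move=> j _.
by have := hXmeas j measurableT (_ : measurable [set v j]); rewrite setTI; apply.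
Qed.

Lemma PEv v : P (Ev v) = (\prod_i negbin_pmf r p (v i))%:E.
Proof.
rewrite /Ev (hXind [set: 'I_n]%SET (fun j => [set v j])) -prodEFin.
rewrite (eq_bigl xpredT); last by move=> i; rewrite inE.
by apply: eq_bigr => i _; rewrite hXlaw.
Qed.

Lemma Ev_iff v t : Ev v t <-> forall j, X j t = v j.
Proof.
split => [h j|h j _]; last exact: h.
by apply: h; rewrite /= inE.
Qed.
Lemma PG_bound (cond : pred ('I_n -> nat)) (K u : R) (M : nat) :
  0 < u -> (1 - p) * u < 1 -> 0 <= K ->
  (forall w, cond w -> 1 <= K * \prod_i u ^+ (w i)) ->
  (P (\big[setU/set0]_(v : {ffun 'I_n -> 'I_M} | cond (fun i => (v i : nat)))
        Ev (fun i => (v i : nat)))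
   <= (K * (p `^ r * (1 - (1 - p) * u) `^ (- r)) ^+ n)%:E)%E.
Proof.
move=> u0 qu1 K0 hc.
apply: le_trans (mu_bigU _ _ _ (fun v : {ffun 'I_n -> 'I_M} => mEv (fun i => (v i : nat)))) _.
under eq_bigr do rewrite PEv.
rewrite sumEFin lee_fin.
have pm : forall x, 0 <= negbin_pmf r p x := fun x => nb_pmf_ge0 x hr hp0 hp1.
apply: le_trans (_ : _ <= \sum_(v : {ffun 'I_n -> 'I_M} | cond (fun i => (v i : nat)))
   K * \prod_i (negbin_pmf r p (v i) * u ^+ (v i))) _.
  apply: ler_sum => v cv.
  rewrite [X in _ <= K * X]big_split mulrCA.
  rewrite -{1}(mulr1 (\prod_i negbin_pmf r p (v i))).
  apply: ler_wpM2l; first by apply: prodr_ge0 => i _.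
  exact: hc.
apply: le_trans (_ : _ <= \sum_(v : {ffun 'I_n -> 'I_M})
   K * \prod_i (negbin_pmf r p (v i) * u ^+ (v i))) _.
  rewrite [X in _ <= X](bigID (fun v : {ffun 'I_n -> 'I_M} => cond (fun i => (v i : nat)))) /=.
  rewrite lerDl; apply: sumr_ge0 => v _; apply: mulr_ge0 => //.
  apply: prodr_ge0 => i _; apply: mulr_ge0 => //; apply: exprn_ge0; exact: ltW.
rewrite -mulr_sumr; apply: ler_wpM2l => //.
rewrite -(bigA_distr_bigA (fun (i : 'I_n) (j : 'I_M) => negbin_pmf r p j * u ^+ j)) /=.
rewrite prodr_const card_ord.
apply: lerXn2r.
- by apply: sumr_ge0 => j _; apply: mulr_ge0 => //; apply: exprn_ge0; exact: ltW.
- by apply: mulr_ge0; apply: powR_ge0.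
under eq_bigr do rewrite nb_pmf_u.
rewrite -mulr_sumr; apply: ler_wpM2l; first exact: powR_ge0.
apply: SS_bound => //; apply: mulr_ge0; [rewrite subr_ge0; exact: ltW|exact: ltW].
Qed.
Lemma nb_chernoff (cond : pred ('I_n -> nat)) (K u : R) :
  0 < u -> (1 - p) * u < 1 -> 0 <= K ->
  (forall w, cond w -> 1 <= K * \prod_i u ^+ (w i)) ->
  (P [set t | cond (fun i => X i t)]
   <= (K * (p `^ r * (1 - (1 - p) * u) `^ (- r)) ^+ n)%:E)%E.
Proof.
move=> u0 qu1 K0 hc.
pose G (M : nat) := \big[setU/set0]_(v : {ffun 'I_n -> 'I_M} | cond (fun i => (v i : nat)))
        Ev (fun i => (v i : nat)).
have mG M : measurable (G M) by apply: bigsetU_measurable => v _; exact: mEv.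
have UA : \bigcup_M G M = [set t | cond (fun i => X i t)].
  apply/seteqP; split => t.
  - move=> [M _ /mem_bigU [v [_ cv /Ev_iff ev]]] /=.
    have -> : (fun i => X i t) = (fun i => (v i : nat)) by apply/funext => i; exact: ev.
    exact: cv.
  - move=> /= ct; pose m := (\max_(i < n) X i t)%N; exists m.+1 => //.
    have hv : forall i, (X i t < m.+1)%N by move=> i; rewrite ltnS; exact: leq_bigmax.
    apply/mem_bigU.
    exists [ffun i => Ordinal (hv i)]; split; first exact: mem_index_enum.
      have -> : (fun i => (([ffun i => Ordinal (hv i)] : {ffun 'I_n -> 'I_m.+1}) i : nat)) = (fun i => X i t).
        by apply/funext => i; rewrite ffunE.
      exact: ct.
    by apply/Ev_iff => j; rewrite ffunE.
have nd : nondecreasing_seq G.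
  apply/nondecreasing_seqP => M; apply/subsetPset => t /mem_bigU [v [_ cv /Ev_iff ev]].
  apply/mem_bigU; exists [ffun i => widen_ord (leqnSn M) (v i)]; split.
  - exact: mem_index_enum.
  - have -> : (fun i => (([ffun i => widen_ord (leqnSn M) (v i)] : {ffun 'I_n -> 'I_M.+1}) i : nat)) = (fun i => (v i : nat)).
      by apply/funext => i; rewrite ffunE.
    exact: cv.
  - by apply/Ev_iff => j; rewrite ffunE /= ev.
have mA : measurable (\bigcup_M G M) by exact: bigcupT_measurable.
have cv := @nondecreasing_cvg_mu _ _ R P _ mG mA nd.
rewrite -UA -(cvg_lim _ cv) //.
apply: lime_le; first by apply/cvg_ex; eexists; exact: cv.
near=> M; exact: PG_bound.
Unshelve. all: end_near.
Qed.
End E.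

Section F.
Variable R : realType.

Lemma powRE (x y : R) : 0 < x -> x `^ y = expR (y * ln x).
Proof. by move=> x0; rewrite /powR gt_eqF. Qed.

Lemma final_eq (r p z : R) (n : nat) : 0 < p -> p < 1 -> 1 < z ->
  ((z - 1) / (z * (1 - p))) `^ (- (n%:R * r * (z - 1))) *
  (p `^ r * (1 - (1 - p) * ((z - 1) / (z * (1 - p)))) `^ (- r)) ^+ n = nb_bound r p n z.
Proof.
move=> p0 p1 z1.
have q0 : 0 < 1 - p by lra.
have z0 : 0 < z by lra.
have zm0 : 0 < z - 1 by lra.
set u := (z - 1) / (z * (1 - p)).
have u0 : 0 < u by rewrite /u divr_gt0 // mulr_gt0.
have hq : 1 - (1 - p) * u = z^-1.
  rewrite /u; field; rewrite ?gt_eqF //; lra.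
have hu : ln u = ln (z - 1) - ln z - ln (1 - p).
  rewrite /u ln_div ?posrE ?mulr_gt0 // lnM ?posrE //; ring.
have B1 : (p * z - p) / (1 - p) = p * (z - 1) / (1 - p) by ring.
have B2 : (z - z * p) / (z - 1) = z * (1 - p) / (z - 1) by ring.
have hB1 : ln ((p * z - p) / (1 - p)) = ln p + ln (z - 1) - ln (1 - p).
  rewrite B1 ln_div ?posrE ?mulr_gt0 // lnM ?posrE //.
have hB2 : ln ((z - z * p) / (z - 1)) = ln z + ln (1 - p) - ln (z - 1).
  rewrite B2 ln_div ?posrE ?mulr_gt0 // lnM ?posrE //.
have b1 : 0 < (p * z - p) / (1 - p) by rewrite B1 divr_gt0 // mulr_gt0.
have b2 : 0 < (z - z * p) / (z - 1) by rewrite B2 divr_gt0 // mulr_gt0.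
have zi0 : 0 < z^-1 by rewrite invr_gt0.
have hl : forall a w : R, 0 < a -> ln (a * expR w) = ln a + w.
  by move=> a w a0; rewrite lnM ?posrE ?expR_gt0 // expRK.
rewrite hq /nb_bound (powRE _ u0) (powRE _ p0) (powRE _ zi0) -expRD -expRM_natr -expRD.
rewrite (powRE _ b2) (powRE _ (mulr_gt0 b1 (expR_gt0 _))) hl //.
rewrite lnV ?posrE // hu hB1 hB2.
congr expR; ring.
Qed.
End F.

Lemma sumT (R : realType) (r : R) (n : nat) (w : 'I_n -> nat) : 0 < r ->
  \sum_(i < n) Tstat r (w i) = n%:R + (\sum_(i < n) w i)%:R / r.
Proof.
move=> r0; rewrite /Tstat -mulr_suml big_split /= sumr_const card_ord natr_sum -mulr_natl.
field; by rewrite gt_eqF.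
Qed.

Lemma pow_prod (R : realType) (u : R) (n : nat) (w : 'I_n -> nat) (c : R) : 0 < u ->
  u `^ (- c) * \prod_(i < n) u ^+ (w i) = u `^ ((\sum_(i < n) w i)%:R - c).
Proof.
move=> u0; rewrite prodrXr -powR_mulrn ?(ltW u0) // mulrC -powRD //.
by rewrite (gt_eqF u0) implybT.
Qed.

Unset Implicit Arguments. Set Strict Implicit.

Theorem corollary3 (R : realType) (d : measure_display) (T : measurableType d)
  (P : probability T R) (r p : R) (n : nat) (X : 'I_n -> T -> nat)
  (hr : 0 < r) (hp0 : 0 < p) (hp1 : p < 1)
  (hXmeas : forall i, measurable_fun setT (X i))
  (hXlaw : forall i (x : nat), P (X i @^-1` [set x]) = (negbin_pmf r p x)%:E)
  (hXind : mutually_independent_nat P X) :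
  (forall z : R, p^-1 <= z ->
     (P [set t | (n%:R * z <= \sum_(i < n) Tstat r (X i t))%R] <= (nb_bound r p n z)%:E)%E) /\
  (forall z : R, 1 < z -> z <= p^-1 ->
     (P [set t | (\sum_(i < n) Tstat r (X i t) <= n%:R * z)%R] <= (nb_bound r p n z)%:E)%E).
Proof.
have q0 : 0 < 1 - p by lra.
have ip1 : 1 < p^-1 by rewrite invf_gt1 // hp0.
split => z.
- move=> hz.
  have z1 : 1 < z by lra.
  have z0 : 0 < z by lra.
  have pz : 1 <= p * z by have := ler_wpM2l (ltW hp0) hz; rewrite mulfV // gt_eqF.
  set u := (z - 1) / (z * (1 - p)).
  have u0 : 0 < u by rewrite /u divr_gt0 ?mulr_gt0 //; lra.
  have u1 : 1 <= u by rewrite /u ler_pdivlMr ?mulr_gt0 //; lra.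
  have qu : (1 - p) * u < 1.
    rewrite /u (_ : (1 - p) * ((z - 1) / (z * (1 - p))) = (z - 1) / z).
      by rewrite ltr_pdivrMr //; lra.
    field; rewrite ?gt_eqF //; lra.
  rewrite -(final_eq r n hp0 hp1 z1).
  apply: (@nb_chernoff R d T P r p n X hr hp0 hp1 hXmeas hXlaw hXind (fun w => n%:R * z <= \sum_(i < n) Tstat r (w i))) => //.
    exact: powR_ge0.
  move=> w; rewrite /= sumT // => hc.
  rewrite pow_prod //; apply: (le_trans _ (ler_powR u1 (_ : 0 <= _))); first by rewrite powRr0.
  have := ler_wpM2r (ltW hr) hc; rewrite mulrDl divfK ?gt_eqF //.
  rewrite subr_ge0; nra.
- move=> z1 hz.
  have z0 : 0 < z by lra.
  have pz : p * z <= 1 by have := ler_wpM2l (ltW hp0) hz; rewrite mulfV // gt_eqF.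
  set u := (z - 1) / (z * (1 - p)).
  have u0 : 0 < u by rewrite /u divr_gt0 ?mulr_gt0 //; lra.
  have u1 : u <= 1 by rewrite /u ler_pdivrMr ?mulr_gt0 //; lra.
  have qu : (1 - p) * u < 1.
    rewrite /u (_ : (1 - p) * ((z - 1) / (z * (1 - p))) = (z - 1) / z).
      by rewrite ltr_pdivrMr //; lra.
    field; rewrite ?gt_eqF //; lra.
  rewrite -(final_eq r n hp0 hp1 z1).
  apply: (@nb_chernoff R d T P r p n X hr hp0 hp1 hXmeas hXlaw hXind (fun w => \sum_(i < n) Tstat r (w i) <= n%:R * z)) => //.
    exact: powR_ge0.
  move=> w; rewrite /= sumT // => hc.
  rewrite pow_prod //; apply: (le_trans _ (ger_powR _ (_ : _ <= 0))); first by rewrite powRr0.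
    by rewrite u0.
  have := ler_wpM2r (ltW hr) hc; rewrite mulrDl divfK ?gt_eqF //.
  rewrite subr_le0; nra.
Qed.
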